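(* Let $G$ be a finite group of order $n$ and $S\subseteq G$ with $gSg^{-1}=S$ for all $g$, $S$ generating $G$, $S=S^{-1}$, $1\notin S$; put $r=\#S$ and assume $\mathrm{Cay}(G,S)$ is not a cycle graph. Let $\ell$ be a prime and $\beta:S\to\mathbb{Z}_\ell$ satisfy: $\beta(gag^{-1})=\beta(a)$; the image of $\beta$ generates $\mathbb{Z}_\ell$; $\beta(s^{-1})=-\beta(s)$; the image of $\beta$ lies in $\mathbb{Z}$; and there exist $m>0$, $(h_1,\dots,h_m)\in S^m$ with $h_1\cdots h_m\in S$ and $\beta(h_1\cdots h_m)\not\equiv\sum_i\beta(h_i)\pmod\ell$. Let $\chi_1,\chi_2\in\mathrm{Irr}(G)$ be congruent characters, i.e. $\chi_1(g)\equiv\chi_2(g)\pmod{\varpi}$ for all $g\in G$, and suppose that $d:=\chi_1(1)=\chi_2(1)$ is prime to $\ell$. Then $\mu_{\chi_1}=0$ if and only if $\mu_{\chi_2}=0$, and if these conditions hold then $\lambda_{\chi_1}=\lambda_{\chi_2}$.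
   Context: Fix $\bar{\mathbb{Q}}\hookrightarrow\bar{\mathbb{Q}}_\ell$ and a finite extension $\mathcal{K}/\mathbb{Q}_\ell$ containing all $n$-th roots of unity, with valuation ring $\mathcal{O}$ and uniformizer $\varpi$. $\mathrm{Irr}(G)$ is the set of irreducible characters $\chi:G\to\bar{\mathbb{Q}}_\ell$ (values in $\mathcal{O}$). For $\chi\in\mathrm{Irr}(G)$, $Q_\chi(T):=r\chi(1)-\sum_{t\in S}(1+T)^{\beta(t)}\chi(t)\in\mathcal{O}[[T]]$ (with $(1+T)^b$, $b\in\mathbb{Z}$, viewed in $\mathbb{Z}_\ell[[T]]$); writing $Q_\chi(T)=\varpi^{\mu}f(T)u(T)$ with $f\in\mathcal{O}[T]$ a distinguished polynomial and $u\in\mathcal{O}[[T]]^\times$, set $\mu_\chi:=\mu$ and $\lambda_\chi:=\deg f$. *)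

(* Defs.v *)
From HB Require Import structures.
From mathcomp Require Import all_boot all_order all_algebra all_fingroup all_solvable all_field all_character.
Set Implicit Arguments. Unset Strict Implicit. Unset Printing Implicit Defensive.
Import GRing.Theory Num.Theory.
Local Open Scope ring_scope.

Definition cayley_adj (gT : finGroupType) (S : {set gT}) : rel gT :=
  fun x y => (x^-1 * y)%g \in S.

Definition is_cycle_graph (T : finType) (V : {set T}) (e : rel T) : Prop :=
  [/\ (3 <= #|V|)%N,
      (forall x, x \in V -> #|[set y in V | e x y]| = 2%N)
    & (forall x y, x \in V -> y \in V ->
         connect [rel u v | [&& u \in V, v \in V & e u v]] x y)].

(* The fixed embedding Qbar -> Qbar_ell is encoded by the valuation ring
   V = {x in Qbar | x lands in the integers of Qbar_ell}: a valuation ring of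
   algC whose trace on Q is Z_(ell). *)
Definition ell_valuation_ring (ell : nat) (V : {pred algC}) : Prop :=
  [/\ 1 \in V,
      (forall x y, x \in V -> y \in V -> x - y \in V),
      (forall x y, x \in V -> y \in V -> x * y \in V),
      (forall x, x != 0 -> x \in V \/ x^-1 \in V)
    & (forall q : rat, ratr q \in V <-> ~~ (ell%:Z %| denq q)%Z)].

(* x lies in the maximal ideal of V (i.e. x = 0 mod varpi). *)
Definition vmax (V : {pred algC}) (x : algC) : Prop :=
  x \in V /\ (x = 0 \/ x^-1 \notin V).

(* k-th coefficient of (1+T)^b in Z_ell[[T]], b integer: generalized binomial. *)
Definition gbinom (b : int) (k : nat) : algC :=
  (\prod_(i < k) (b%:~R - i%:R)) / (k`!)%:R.

(* Coefficients of Q_chi(T) = r chi(1) - sum_{t in S} (1+T)^{beta t} chi(t). *)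
Definition Qcoef (gT : finGroupType) (G : {group gT}) (S : {set gT})
  (beta : gT -> int) (chi : 'CF(G)) (k : nat) : algC :=
  (k == 0%N)%:R * (#|S|%:R * chi 1%g) - \sum_(t in S) gbinom (beta t) k * chi t.

(* mu = 0 for the power series with coefficients a: not all coefficients lie
   in varpi O, i.e. some coefficient is a unit. *)
Definition mu_zero (V : {pred algC}) (a : nat -> algC) : Prop :=
  exists k, a k \in V /\ ~ vmax V (a k).

(* lambda = k: a_k is the first coefficient of minimal valuation. *)
Definition is_lambda (V : {pred algC}) (a : nat -> algC) (k : nat) : Prop :=
  [/\ a k != 0, (forall j, a j / a k \in V)
    & (forall j, (j < k)%N -> vmax V (a j / a k))].

(* Main.v *)
Require Import Defs.
From HB Require Import structures.
From mathcomp Require Import all_boot all_order all_algebra all_fingroup all_solvable all_field all_character.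
From mathcomp Require Import ring.
Import GRing.Theory Num.Theory.
Local Open Scope ring_scope.

Definition vring (V : {pred algC}) : Prop :=
  [/\ 1 \in V,
      (forall x y, x \in V -> y \in V -> x - y \in V),
      (forall x y, x \in V -> y \in V -> x * y \in V)
    & (forall x, x != 0 -> x \in V \/ x^-1 \in V)].

Lemma vring_of ell V : ell_valuation_ring ell V -> vring V.
Proof. by case=> *; split. Qed.

Section VR.
Variable V : {pred algC}.
Hypothesis hV : vring V.

Lemma V1 : 1 \in V. Proof. by case: hV. Qed.
Lemma VB x y : x \in V -> y \in V -> x - y \in V. Proof. by case: hV => _ h _ _; apply: h. Qed.
Lemma VM x y : x \in V -> y \in V -> x * y \in V. Proof. by case: hV => _ _ h _; apply: h. Qed.
Lemma Vinv x : x != 0 -> x \in V \/ x^-1 \in V. Proof. by case: hV => _ _ _ h; apply: h. Qed.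
Lemma V0 : 0 \in V. Proof. by rewrite -(subrr 1) VB ?V1. Qed.
Lemma VN x : x \in V -> - x \in V. Proof. by move=> h; rewrite -sub0r VB ?V0. Qed.
Lemma VD x y : x \in V -> y \in V -> x + y \in V.
Proof. by move=> hx hy; rewrite -[y]opprK VB ?VN. Qed.
Lemma Vsum (I : Type) (r : seq I) (P : pred I) (F : I -> algC) :
  (forall i, P i -> F i \in V) -> \sum_(i <- r | P i) F i \in V.
Proof. by move=> h; apply: (big_ind (fun x => x \in V)) => //; [exact: V0| exact: VD]. Qed.
Lemma Vnat n : n%:R \in V.
Proof. elim: n => [|n IH]; first exact: V0. by rewrite -addn1 natrD VD ?V1. Qed.
Lemma Vint (z : int) : z%:~R \in V.
Proof. case: z => n; first by rewrite Vnat. by rewrite NegzE mulrNz VN ?Vnat. Qed.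

Lemma vmax0 : vmax V 0. Proof. by split; [exact: V0| left]. Qed.
Lemma vmaxM v x : v \in V -> vmax V x -> vmax V (v * x).
Proof.
move=> hv [hx hx0]; split; first exact: VM.
have [->|nz] := eqVneq (v * x) 0; [by left | right].
apply/negP=> hi; case: hx0 => [x0|]; first by move: nz; rewrite x0 mulr0 eqxx.
apply/negP/negPn; have -> : x^-1 = v * (v * x)^-1.
  by rewrite invfM mulrA mulfV ?mul1r //; apply: contraNneq nz => ->; rewrite mul0r.
exact: VM.
Qed.
Lemma vmaxN x : vmax V x -> vmax V (- x).
Proof. by move=> h; rewrite -mulN1r; apply: vmaxM h; rewrite VN ?V1. Qed.
Lemma vmaxB x y : vmax V x -> vmax V y -> vmax V (x - y).
Proof.
move=> [hx hx0] [hy hy0]; split; first exact: VB.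
have [->|nz] := eqVneq (x - y) 0; [by left | right].
apply/negP=> hi.
have [x0|xnz] := eqVneq x 0.
  case: hy0 => [y0|/negP H]; first by move: nz; rewrite x0 y0 subrr eqxx.
  by apply: H; move: hi; rewrite x0 sub0r invrN => /VN; rewrite opprK.
have [y0|ynz] := eqVneq y 0.
  case: hx0 => [x0|/negP H]; first by rewrite x0 eqxx in xnz.
  by apply: H; move: hi; rewrite y0 subr0.
have xy : x / y != 0 by rewrite mulf_neq0 ?invr_eq0.
case: (@Vinv _ xy) => h.
  case: hy0 => [y0|/negP H]; first by rewrite y0 eqxx in ynz.
  apply: H.
  have -> : y^-1 = (x - y)^-1 * (x / y - 1) by field; rewrite ynz nz.
  by apply: VM => //; rewrite VB ?V1.
case: hx0 => [x0|/negP H]; first by rewrite x0 eqxx in xnz.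
apply: H.
have -> : x^-1 = (x - y)^-1 * (1 - (x / y)^-1) by field; rewrite xnz ynz nz.
by apply: VM => //; rewrite VB ?V1.
Qed.
Lemma vmaxD x y : vmax V x -> vmax V y -> vmax V (x + y).
Proof. by move=> hx hy; rewrite -[y]opprK; apply: vmaxB => //; apply: vmaxN. Qed.
Lemma vmax_sum (I : Type) (r : seq I) (P : pred I) (F : I -> algC) :
  (forall i, P i -> vmax V (F i)) -> vmax V (\sum_(i <- r | P i) F i).
Proof. by move=> h; apply: (big_ind (vmax V)) => //; [exact: vmax0| exact: vmaxD]. Qed.

Definition ub a := [&& a \in V, a != 0 & a^-1 \in V].
Lemma ubP a : (a \in V /\ ~ vmax V a) <-> ub a.
Proof.
rewrite /ub; split.
  case=> ha hn; rewrite ha /=; have [a0|nz] := eqVneq a 0; first by case: hn; rewrite a0; exact: vmax0.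
  by case: (boolP (a^-1 \in V)) => // hi; case: hn; split => //; right.
by case/and3P=> ha nz hi; split => // -[_ [a0|]]; [move: nz; rewrite a0 eqxx| rewrite hi].
Qed.
Lemma vmax_of a : a \in V -> ~~ ub a -> vmax V a.
Proof.
move=> ha; rewrite /ub ha /= negb_and negbK => /orP h; split => //.
by case: h => h; [left; apply/eqP | right].
Qed.
Lemma transfer a b : vmax V (a - b) -> ub a -> ub b.
Proof.
move=> hd /ubP [ha hn]; apply/ubP.
have hb : b = a - (a - b) by rewrite opprB addrC subrK.
split; first by rewrite hb VB //; case: hd.
move=> hm; apply: hn; have -> : a = b + (a - b) by rewrite addrC subrK.
exact: vmaxD.
Qed.

Lemma Aint_V x : x \in Aint -> x \in V.
Proof.
move=> hA; case: (boolP (x \in V)) => // hxV; exfalso.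
have x0 : x != 0 by apply: contraNneq hxV => ->; exact: V0.
have hy : x^-1 \in V by case: (@Vinv _ x0) => // h; rewrite h in hxV.
set p := minCpoly x.
have pm : p \is monic := minCpoly_monic x.
have pr : root p x := root_minCpoly x.
have pc : forall i, p`_i \in V.
  move=> i; have /polyOverP/(_ i) := hA; rewrite -/p => /intrP [m ->]; exact: Vint.
have := pr; rewrite /root horner_coef.
case E: (size p) => [|n].
  by move=> _; move: (monic_neq0 pm); rewrite -size_poly_eq0 E.
rewrite big_ord_recr /= -/(lead_coef p).
have lc : lead_coef p = 1 by apply/monicP.
have szE : (size p).-1 = n by rewrite E.
rewrite lead_coefE szE in lc. rewrite lc mul1r.
case: n E szE lc => [|m] E szE lc.
  by rewrite big_ord0 add0r expr0 oner_eq0.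
move=> /eqP heq.
have : (\sum_(i < m.+1) p`_i * x ^+ i + x ^+ m.+1) * x^-1 ^+ m = 0 by rewrite heq mul0r.
rewrite mulrDl exprS -mulrA -exprMn mulfV // expr1n mulr1 mulr_suml.
move=> /eqP; rewrite addrC addr_eq0 => /eqP hx.
move: hxV; rewrite hx VN //; apply: Vsum => i _.
have -> : p`_i * x ^+ i * x^-1 ^+ m = p`_i * x^-1 ^+ (m - i).
  rewrite -mulrA; congr (_ * _).
  have hi : (i <= m)%N by rewrite -ltnS.
  have e : x^-1 ^+ m = x^-1 ^+ (m - i) * x^-1 ^+ i by rewrite -exprD subnK.
  by rewrite e mulrCA -exprMn mulfV // expr1n mulr1.
apply: VM => //; elim: (m - i)%N => [|k IH]; first by rewrite expr0 V1.
by rewrite exprS VM.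
Qed.

End VR.

Definition Pf (b : int) (k : nat) : algC := \prod_(i < k) (b%:~R - i%:R).

Lemma gbinomE b k : gbinom b k = Pf b k / (k`!)%:R.
Proof. by []. Qed.

Lemma gbinom0 b : gbinom b 0 = 1.
Proof. by rewrite gbinomE /Pf big_ord0 fact0 divr1. Qed.

Lemma gbinom_pascal (b : int) k :
  gbinom (b + 1) k.+1 = gbinom b k.+1 + gbinom b k.
Proof.
rewrite !gbinomE.
have h1 : Pf (b + 1) k.+1 = (b%:~R + 1) * Pf b k.
  rewrite /Pf big_ord_recl /= intrD subr0; congr (_ * _).
  by apply: eq_bigr => i _; rewrite /bump /= add1n -[i.+1]addn1 natrD; ring.
have h2 : Pf b k.+1 = Pf b k * (b%:~R - k%:R) by rewrite /Pf big_ord_recr.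
have f0 : (k`!)%:R != 0 :> algC by rewrite pnatr_eq0 -lt0n fact_gt0.
have k0 : (k.+1)%:R != 0 :> algC by rewrite pnatr_eq0.
rewrite h1 h2 factS natrM; field; rewrite f0 /=; by move: k0; rewrite -natr1 addrC.
Qed.

Lemma gbinom_V V (hV : vring V) b k : gbinom b k \in V.
Proof.
elim/int_rect: b k => [|n IH|n IH] k.
- case: k => [|k]; first by rewrite gbinom0 V1.
  rewrite gbinomE /Pf big_ord_recl /= subrr mul0r mul0r; exact: V0.
- case: k => [|k]; first by rewrite gbinom0 V1.
  have -> : (n.+1 : int) = n%:Z + 1 by rewrite -addn1 PoszD.
  by rewrite gbinom_pascal VD.
- elim: k => [|k IHk]; first by rewrite gbinom0 V1.
  have := gbinom_pascal (- (n.+1)%:Z) k.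
  have -> : - (n.+1)%:Z + 1 = - n%:Z by rewrite -addn1 PoszD opprD addrK.
  move=> e; have -> : gbinom (- (n.+1)%:Z) k.+1 = gbinom (- n%:Z) k.+1 - gbinom (- (n.+1)%:Z) k
    by rewrite e addrK.
  by rewrite VB.
Qed.

Lemma lambda_of V (hV : vring V) (a : nat -> algC) k :
  (forall j, a j \in V) -> ub V (a k) -> (forall j, (j < k)%N -> ~~ ub V (a j)) ->
  is_lambda V a k.
Proof.
move=> hA /and3P [_ nz hi] hlt; split => //.
  by move=> j; apply: (VM _ hV).
move=> j /hlt hj; rewrite mulrC; apply: (vmaxM _ hV) => //; exact (@vmax_of V (a j) (hA j) hj).
Qed.

Theorem proposition3p8 (gT : finGroupType) (G : {group gT}) (S : {set gT})
  (ell : nat) (beta : gT -> int) (V : {pred algC}) (i1 i2 : Iirr G) (d : nat) :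
  S \subset G ->
  (forall g, g \in G -> (S :^ g)%g = S) ->
  <<S>>%g = G ->
  (forall s, s \in S -> (s^-1)%g \in S) ->
  1%g \notin S ->
  ~ is_cycle_graph G (cayley_adj S) ->
  prime ell ->
  (forall a g, a \in S -> g \in G -> beta (a ^ g)%g = beta a) ->
  (exists2 s, s \in S & ~~ (ell%:Z %| beta s)%Z) ->
  (forall s, s \in S -> beta (s^-1)%g = - beta s) ->
  (exists hs : seq gT,
     [/\ (0 < size hs)%N, all (mem S) hs, (\prod_(h <- hs) h)%g \in S &
         (beta (\prod_(h <- hs) h)%g != \sum_(h <- hs) beta h %[mod ell%:Z])%Z]) ->
  ell_valuation_ring ell V ->
  (forall g, vmax V ('chi_i1 g - 'chi_i2 g)) ->
  'chi_i1 1%g = d%:R -> 'chi_i2 1%g = d%:R -> coprime d ell ->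
  (mu_zero V (Qcoef S beta 'chi_i1) <-> mu_zero V (Qcoef S beta 'chi_i2)) /\
  (mu_zero V (Qcoef S beta 'chi_i1) ->
     exists k, is_lambda V (Qcoef S beta 'chi_i1) k /\
               is_lambda V (Qcoef S beta 'chi_i2) k).
Proof.
move=> _ _ _ _ _ _ _ _ _ _ _ /vring_of hV hchi h1 h2 _.
set Q1 := Qcoef S beta 'chi_i1; set Q2 := Qcoef S beta 'chi_i2.
have QV : forall (i : Iirr G) k, Qcoef S beta 'chi_i k \in V.
  move=> i k; rewrite /Qcoef; apply: (VB _ hV).
    by apply: (VM _ hV); [exact: (Vnat _ hV) | apply: (VM _ hV); [exact: (Vnat _ hV)| exact/(Aint_V _ hV)/Aint_irr]].
  by apply: (Vsum _ hV) => t _; apply: (VM _ hV); [exact: (gbinom_V _ hV) | exact/(Aint_V _ hV)/Aint_irr].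
have D12 : forall k, vmax V (Q1 k - Q2 k).
  move=> k; rewrite /Q1 /Q2 /Qcoef h1 h2.
  have -> : forall c A B : algC, (c - A) - (c - B) = B - A by move=> *; ring.
  rewrite -sumrB; apply: (vmax_sum _ hV) => t _; rewrite -mulrBr; apply: (vmaxM _ hV).
    exact: (gbinom_V _ hV).
  by rewrite -opprB; apply: (vmaxN _ hV).
have D21 : forall k, vmax V (Q2 k - Q1 k) by move=> k; rewrite -opprB; apply: (vmaxN _ hV).
have T12 : forall k, ub V (Q1 k) = ub V (Q2 k).
  by move=> k; apply/idP/idP; apply: (transfer _ hV).
split.
  split=> -[k /(ubP _ hV) hk]; exists k; apply/(ubP _ hV); by [rewrite -T12 | rewrite T12].
move=> [k0 /(ubP _ hV) hk0].
have ex : exists k, ub V (Q1 k) by exists k0.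
case: (ex_minnP ex) => k hk hmin.
exists k; split; apply: lambda_of => //.
- by move=> j; exact: QV.
- by move=> j hj; apply/negP => /hmin; rewrite leqNgt hj.
- by move=> j; exact: QV.
- by rewrite -T12.
- by move=> j hj; apply/negP; rewrite -T12 => /hmin; rewrite leqNgt hj.
Qed.
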